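(* Let $R$ be a commutative ring with identity and $a\in R$. Then $a\Gamma_a(R)[x]=a\Gamma_a(R[x])$, where $a\Gamma_a(R)[x]$ denotes the set of polynomials in $R[x]$ all of whose coefficients lie in $a\Gamma_a(R)$, and $a\Gamma_a(R[x])$ is computed with $R[x]$ viewed as a module over itself (equivalently, over $R$).
   Context: For a ring (or module) $S$ containing $a$ acting by multiplication: $\Gamma_{a}(S)=\{s\in S \mid a^{k}s=0 \text{ for some } k\in\mathbb{Z}^{+}\}$ and $a\Gamma_{a}(S)=\{as \mid s\in \Gamma_a(S)\}$. *)

(* Defs.v *)
From mathcomp Require Import all_boot all_algebra.
Set Implicit Arguments. Unset Strict Implicit. Unset Printing Implicit Defensive.
Import GRing.Theory.
Local Open Scope ring_scope.

Definition Gamma (S : comNzRingType) (a : S) (s : S) : Prop :=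
  exists k : nat, (0 < k)%N /\ a ^+ k * s = 0.

Definition aGamma (S : comNzRingType) (a : S) (s : S) : Prop :=
  exists t : S, Gamma a t /\ s = a * t.

(* Main.v *)
Require Import Defs.
From mathcomp Require Import all_boot all_algebra.
Import GRing.Theory.
Local Open Scope ring_scope.

Lemma aG0 (S : comNzRingType) (a : S) : aGamma a 0.
Proof. exists 0; split; last by rewrite mulr0. by exists 1%N; rewrite mulr0. Qed.

Lemma aGD (S : comNzRingType) (a : S) x y : aGamma a x -> aGamma a y -> aGamma a (x + y).
Proof.
move=> [t [[k [k0 hk]] ->]] [u [[l [l0 hl]] ->]].
exists (t + u); split; last by rewrite mulrDr.
exists (k + l)%N; split; first by rewrite addn_gt0 k0.
by rewrite mulrDr exprD -mulrA (mulrC (a ^+ l)) mulrA hk mul0r -mulrA hl mulr0 addr0.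
Qed.

Theorem mainTheorem8 (R : comNzRingType) (a : R) (p : {poly R}) :
  (forall i : nat, aGamma a p`_i) <-> aGamma (a%:P) p.
Proof.
split.
  move=> H; rewrite -[p]coefK poly_def.
  apply: (big_ind (aGamma a%:P)); [exact: aG0| exact: aGD|].
  move=> i _; have [t [[k [k0 hk]] ht]] := H i.
  exists (t%:P * 'X^i); split; last by rewrite -mul_polyC ht polyCM mulrA.
  exists k; split=> //; rewrite mulrA; have -> : a%:P ^+ k = (a ^+ k)%:P by rewrite rmorphXn.
  by rewrite -polyCM hk mul0r.
move=> [q [[k [k0 hk]] ->]] i.
exists q`_i; split; last by rewrite coefCM.
exists k; split=> //.
by rewrite -coefCM rmorphXn hk coef0.
Qed.
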